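(* Let $0\le\beta<1$ and $\Delta>1$ be constants and let $q\ge3(1-\beta)\Delta+2$. Define $f_q:\mathbb{R}_{\ge0}\to\mathbb{R}_{\ge0}$ by $f_q(x)=\frac{2(1-\beta)}{q-1-(1-\beta)x}$ if $x\le\frac{q-1}{1-\beta}-2$ and $f_q(x)=1$ otherwise. Let $X\sim\mathrm{Bin}(n,\Delta/n)$. Then for all sufficiently large $n$, $\mathbb{E}[f_q(X)]<\frac{1}{\Delta}$. *)

(* Defs.v *)
From Stdlib Require Import Reals Lra Lia.
Open Scope R_scope.

Definition f_q (beta q x : R) : R :=
  if Rle_dec x ((q - 1) / (1 - beta) - 2)
  then 2 * (1 - beta) / (q - 1 - (1 - beta) * x)
  else 1.

Definition binom_pmf (n : nat) (p : R) (k : nat) : R :=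
  C n k * p ^ k * (1 - p) ^ (n - k).

Definition binom_expect (n : nat) (p : R) (g : R -> R) : R :=
  sum_f_R0 (fun k => binom_pmf n p k * g (INR k)) n.

(* Main.v *)
Require Import Defs.
From Stdlib Require Import Reals Lra Lia Factorial Arith ZArith.
Open Scope R_scope.

Fixpoint ff (x : R) (j : nat) : R :=
  match j with O => 1 | S j' => ff x j' * (x - INR j') end.

Definition BE (n : nat) (p : R) (phi : nat -> R) : R :=
  sum_f_R0 (fun k => binom_pmf n p k * phi k) n.

Lemma ff_fact m j : (j <= m)%nat -> ff (INR m) j * INR (fact (m - j)) = INR (fact m).
Proof.
  induction j as [|j IH]; intros Hj.
  - simpl. rewrite Nat.sub_0_r. ring.
  - set (k := (m - S j)%nat).
    assert (Hk : (m - j = S k)%nat) by (unfold k; lia).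
    specialize (IH ltac:(lia)). rewrite Hk in IH.
    simpl ff. rewrite <- IH.
    change (fact (S k)) with (S k * fact k)%nat. rewrite mult_INR.
    assert (HS : INR (S k) = INR m - INR j).
    { rewrite <- minus_INR by lia. f_equal. lia. }
    rewrite HS. ring.
Qed.

Lemma ff_zero k j : (k < j)%nat -> ff (INR k) j = 0.
Proof.
  induction j as [|j IH]; intros H; [lia|].
  simpl. destruct (Nat.eq_dec k j) as [->|Hn].
  - ring.
  - rewrite IH by lia. ring.
Qed.

Lemma C_absorb n j i : (j + i <= n)%nat ->
  C n (j + i) * ff (INR (j + i)) j = ff (INR n) j * C (n - j) i.
Proof.
  intros H.
  assert (H1 := ff_fact (j + i) j ltac:(lia)).
  assert (H2 := ff_fact n j ltac:(lia)).
  replace (j + i - j)%nat with i in H1 by lia.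
  unfold C.
  replace (n - (j + i))%nat with (n - j - i)%nat by lia.
  assert (A1 := INR_fact_lt_0 i). assert (A2 := INR_fact_lt_0 (n - j)).
  assert (A3 := INR_fact_lt_0 (j+i)). assert (A4 := INR_fact_lt_0 (n - j - i)).
  assert (E1 : ff (INR (j + i)) j = INR (fact (j+i)) / INR (fact i)).
  { rewrite <- H1. field. lra. }
  assert (E2 : ff (INR n) j = INR (fact n) / INR (fact (n - j))).
  { rewrite <- H2. field. lra. }
  rewrite E1, E2. field. repeat split; lra.
Qed.

Lemma binom_sum1 n p : sum_f_R0 (fun k => C n k * p ^ k * (1 - p) ^ (n - k)) n = 1.
Proof. rewrite <- binomial. replace (p + (1 - p)) with 1 by ring. apply pow1. Qed.

Lemma BE_ff n p j : BE n p (fun k => ff (INR k) j) = ff (INR n) j * p ^ j.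
Proof.
  unfold BE, binom_pmf.
  destruct (le_lt_dec j n) as [Hj|Hj].
  - destruct j as [|j].
    + simpl. transitivity (sum_f_R0 (fun k => C n k * p ^ k * (1 - p) ^ (n - k)) n).
      * apply sum_eq. intros; simpl; ring.
      * rewrite binom_sum1. ring.
    + destruct (Nat.eq_dec j n) as [Heq|Hne]; [lia|].
      rewrite (tech2 _ j n) by lia.
      rewrite sum_eq_R0.
      2:{ intros k Hk. rewrite ff_zero by lia. ring. }
      rewrite Rplus_0_l.
      transitivity (ff (INR n) (S j) * p ^ S j *
        sum_f_R0 (fun i => C (n - S j) i * p ^ i * (1 - p) ^ (n - S j - i)) (n - S j)).
      * rewrite scal_sum. apply sum_eq. intros i Hi. simpl plus.
        replace (C (n - S j) i * p ^ i * (1 - p) ^ (n - S j - i) * (ff (INR n) (S j) * p ^ S j)) with ((ff (INR n) (S j) * C (n - S j) i) * p ^ i * (1 - p) ^ (n - S j - i) * p ^ S j) by ring. change (S (j + i)) with (S j + i)%nat. rewrite <- C_absorb by lia.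
        replace (n - (S j + i))%nat with (n - S j - i)%nat by lia.
        rewrite pow_add. ring.
      * rewrite binom_sum1. ring.
  - rewrite (ff_zero n j Hj). rewrite sum_eq_R0; [ring|].
    intros k Hk. rewrite ff_zero by lia. ring.
Qed.

Lemma ff_nonneg k j : 0 <= ff (INR k) j.
Proof.
  induction j as [|j IH]; simpl; [lra|].
  destruct (le_lt_dec j k) as [H|H].
  - apply Rmult_le_pos; auto. apply le_INR in H. lra.
  - rewrite ff_zero by lia. lra.
Qed.

Lemma ff_le_pow n j : ff (INR n) j <= INR n ^ j.
Proof.
  induction j as [|j IH]; simpl; [lra|].
  destruct (le_lt_dec j n) as [H|H].
  - assert (0 <= INR j) by apply pos_INR. apply le_INR in H.
    assert (0 <= ff (INR n) j) by apply ff_nonneg.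
    rewrite Rmult_comm. apply Rmult_le_compat; lra.
  - rewrite ff_zero by lia. rewrite Rmult_0_l.
    apply Rmult_le_pos; [apply pos_INR| apply pow_le, pos_INR].
Qed.

Lemma ff_shift x j : ff (x + 1) (S j) = (x + 1) * ff x j.
Proof.
  induction j as [|j IH]; [simpl; ring|].
  change (ff (x + 1) (S (S j))) with (ff (x + 1) (S j) * (x + 1 - INR (S j))).
  change (ff x (S j)) with (ff x j * (x - INR j)).
  rewrite IH. rewrite S_INR. ring.
Qed.

Lemma ff_mono k j : ff (INR k) j <= ff (INR (S k)) j.
Proof.
  destruct j as [|j]; [simpl; lra|].
  rewrite S_INR. rewrite ff_shift.
  change (ff (INR k) (S j)) with (ff (INR k) j * (INR k - INR j)).
  assert (0 <= ff (INR k) j) by apply ff_nonneg.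
  assert (0 <= INR j) by apply pos_INR.
  nra.
Qed.

Lemma ff_pos a j : INR j < a + 1 -> 0 < ff a j.
Proof.
  induction j as [|j IH]; intros H; simpl; [lra|].
  rewrite S_INR in H. apply Rmult_lt_0_compat; [apply IH|]; lra.
Qed.

Lemma ff_mono_a a0 a j : a0 <= a -> INR j < a0 + 1 -> ff a0 j <= ff a j.
Proof.
  induction j as [|j IH]; intros H1 H; simpl; [lra|].
  rewrite S_INR in H.
  assert (0 < ff a0 j) by (apply ff_pos; lra).
  assert (ff a0 j <= ff a j) by (apply IH; lra).
  apply Rmult_le_compat; lra.
Qed.

Lemma BE_plus n p f g : BE n p (fun k => f k + g k) = BE n p f + BE n p g.
Proof. unfold BE. rewrite <- sum_plus. apply sum_eq. intros; ring. Qed.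

Lemma BE_scal n p c f : BE n p (fun k => c * f k) = c * BE n p f.
Proof. unfold BE. rewrite scal_sum. apply sum_eq. intros; ring. Qed.

Lemma BE_ext n p f g : (forall k, f k = g k) -> BE n p f = BE n p g.
Proof. intros H. unfold BE. apply sum_eq. intros; rewrite H; reflexivity. Qed.

Lemma BE_lin n p (c : nat -> R) J :
  BE n p (fun k => sum_f_R0 (fun j => c j * ff (INR k) j) J) =
  sum_f_R0 (fun j => c j * (ff (INR n) j * p ^ j)) J.
Proof.
  induction J as [|J IH].
  - rewrite (BE_ext n p _ (fun k => c 0%nat * ff (INR k) 0)) by (intros; reflexivity).
    rewrite BE_scal, BE_ff. reflexivity.
  - rewrite (BE_ext n p _ (fun k => sum_f_R0 (fun j => c j * ff (INR k) j) J + c (S J) * ff (INR k) (S J))) by (intros; reflexivity).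
    rewrite BE_plus, IH, BE_scal, BE_ff. reflexivity.
Qed.

Lemma C_nonneg n k : 0 <= C n k.
Proof.
  unfold C. assert (A1 := INR_fact_lt_0 n). assert (A2 := INR_fact_lt_0 k).
  assert (A3 := INR_fact_lt_0 (n - k)).
  apply Rlt_le. apply Rdiv_lt_0_compat; [lra| apply Rmult_lt_0_compat; lra].
Qed.

Lemma BE_mono n p f g : 0 <= p <= 1 -> (forall k, f k <= g k) -> BE n p f <= BE n p g.
Proof.
  intros Hp H. unfold BE. apply sum_Rle. intros k _.
  apply Rmult_le_compat_l; [|apply H].
  unfold binom_pmf. apply Rmult_le_pos; [apply Rmult_le_pos|].
  - apply C_nonneg.
  - apply pow_le; lra.
  - apply pow_le; lra.
Qed.

Lemma tele a x J : INR J < a -> x <> a ->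
  sum_f_R0 (fun j => ff x j / ff a (S j)) J = (1 - ff x (S J) / ff a (S J)) / (a - x).
Proof.
  intros HJ Hx.
  induction J as [|J IH].
  - simpl in *. field. split; lra.
  - rewrite S_INR in HJ.
    rewrite tech5, IH by lra.
    assert (P1 : 0 < ff a (S J)) by (apply ff_pos; rewrite S_INR; lra).
    change (ff x (S (S J))) with (ff x (S J) * (x - INR (S J))).
    change (ff a (S (S J))) with (ff a (S J) * (a - INR (S J))).
    rewrite S_INR. field. repeat split; lra.
Qed.

Definition hJ a J x :=
  sum_f_R0 (fun j => (2 / ff a (S j)) * ff x j) J + (2 / ff a (S J)) * ff x (S J).

Definition g a x := if Rle_dec x (a - 2) then 2 / (a - x) else 1.

Lemma hJ_ge_r a J k : INR J < a -> 1 <= a - INR k -> 2 / (a - INR k) <= hJ a J (INR k).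
Proof.
  intros HJ Hk.
  assert (P1 : 0 < ff a (S J)) by (apply ff_pos; rewrite S_INR; lra).
  assert (E : 2 / (a - INR k) = 2 * sum_f_R0 (fun j => ff (INR k) j / ff a (S j)) J
             + 2 * ff (INR k) (S J) / (ff a (S J) * (a - INR k))).
  { rewrite tele by lra. field. lra. }
  rewrite E. unfold hJ. rewrite scal_sum.
  apply Rplus_le_compat.
  - right. apply sum_eq. intros i Hi. unfold Rdiv. ring.
  - assert (0 <= ff (INR k) (S J)) by apply ff_nonneg.
    unfold Rdiv. rewrite Rinv_mult.
    assert (0 < / ff a (S J)) by (apply Rinv_0_lt_compat; lra).
    assert (0 < / (a - INR k) <= 1).
    { split. apply Rinv_0_lt_compat; lra.
      rewrite <- Rinv_1. apply Rinv_le_contravar; lra. }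
    assert (0 <= 2 * ff (INR k) (S J) * / ff a (S J)) by (apply Rmult_le_pos; [lra|lra]).
    nra.
Qed.

Lemma hJ_mono a J k : INR J < a -> hJ a J (INR k) <= hJ a J (INR (S k)).
Proof.
  intros HJ. unfold hJ.
  apply Rplus_le_compat.
  - apply sum_Rle. intros i Hi.
    apply Rmult_le_compat_l; [|apply ff_mono].
    apply le_INR in Hi.
    assert (0 < ff a (S i)) by (apply ff_pos; rewrite S_INR; lra).
    apply Rlt_le, Rdiv_lt_0_compat; lra.
  - apply Rmult_le_compat_l; [|apply ff_mono].
    assert (0 < ff a (S J)) by (apply ff_pos; rewrite S_INR; lra).
    apply Rlt_le, Rdiv_lt_0_compat; lra.
Qed.

Lemma hJ_ge1 a J k : INR J < a -> 4 <= a -> INR k > a - 2 -> 1 <= hJ a J (INR k).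
Proof.
  intros HJ Ha. induction k as [|k IH]; intros Hk.
  - simpl in Hk. lra.
  - destruct (Rle_lt_dec 1 (a - INR (S k))) as [H|H].
    + eapply Rle_trans; [|apply hJ_ge_r; auto].
      rewrite S_INR in *. apply Rmult_le_reg_r with (a - (INR k + 1)); [lra|].
      unfold Rdiv. rewrite Rmult_assoc, Rinv_l by lra. lra.
    + rewrite S_INR in H, Hk.
      eapply Rle_trans; [apply IH; lra| apply hJ_mono; auto].
Qed.

Lemma g_le_h a J k : INR J < a -> 4 <= a -> g a (INR k) <= hJ a J (INR k).
Proof.
  intros HJ Ha. unfold g. destruct (Rle_dec (INR k) (a - 2)) as [H|H].
  - apply hJ_ge_r; lra.
  - apply hJ_ge1; lra.
Qed.

Definition V a D J :=
  sum_f_R0 (fun j => (2 / ff a (S j)) * D ^ j) J + (2 / ff a (S J)) * D ^ (S J).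

Lemma BE_h_le a J n D : INR J < a -> (1 <= n)%nat -> 0 <= D <= INR n ->
  BE n (D / INR n) (fun k => hJ a J (INR k)) <= V a D J.
Proof.
  intros HJ Hn HD.
  assert (Hn' : 1 <= INR n) by (apply (le_INR 1); auto).
  assert (Hp : 0 <= D / INR n) by (apply Rmult_le_pos; [lra| apply Rlt_le, Rinv_0_lt_compat; lra]).
  assert (Key : forall j, ff (INR n) j * (D / INR n) ^ j <= D ^ j).
  { intros j. replace (D ^ j) with (INR n ^ j * (D / INR n) ^ j).
    - apply Rmult_le_compat_r; [apply pow_le; auto| apply ff_le_pow].
    - rewrite <- Rpow_mult_distr. f_equal. field. lra. }
  unfold hJ. rewrite BE_plus, BE_lin, BE_scal, BE_ff. unfold V.
  apply Rplus_le_compat.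
  - apply sum_Rle. intros i Hi. apply Rmult_le_compat_l; [|apply Key].
    apply le_INR in Hi.
    assert (0 < ff a (S i)) by (apply ff_pos; rewrite S_INR; lra).
    apply Rlt_le, Rdiv_lt_0_compat; lra.
  - apply Rmult_le_compat_l; [|apply Key].
    assert (0 < ff a (S J)) by (apply ff_pos; rewrite S_INR; lra).
    apply Rlt_le, Rdiv_lt_0_compat; lra.
Qed.

Ltac pos := repeat match goal with
 | |- 0 <= _ + _ => apply Rplus_le_le_0_compat
 | |- 0 <= _ * _ => apply Rmult_le_pos
 | |- 0 <= _ ^ _ => apply pow_le
 | |- _ => lra
 end.
Lemma polyA_0 x : 1/1 <= x <= 5/2 -> 0 < (6)*1 + (-25)*x + (22)*x^2 + (1)*x^3 + (-2)*x^4.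
Proof.
  intros [Hl Hh].
  assert (Hu : 0 <= (2)*x - (2)) by lra.
  assert (Hv : 0 <= (5) - (2)*x) by lra.
  assert (HS : 0 <= 672 * ((2)*x - (2))^1 * ((5) - (2)*x)^3 + 2952 * ((2)*x - (2))^2 * ((5) - (2)*x)^2 + 3132 * ((2)*x - (2))^3 * ((5) - (2)*x)^1 + 528 * ((2)*x - (2))^4 * ((5) - (2)*x)^0) by pos.
  assert (HE : (2592) * ((6)*1 + (-25)*x + (22)*x^2 + (1)*x^3 + (-2)*x^4) = (5184) + (672 * ((2)*x - (2))^1 * ((5) - (2)*x)^3 + 2952 * ((2)*x - (2))^2 * ((5) - (2)*x)^2 + 3132 * ((2)*x - (2))^3 * ((5) - (2)*x)^1 + 528 * ((2)*x - (2))^4 * ((5) - (2)*x)^0)) by ring.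
  lra.
Qed.

Lemma polyA x : 1 <= x <= 5/2 -> 0 < (6)*1 + (-25)*x + (22)*x^2 + (1)*x^3 + (-2)*x^4.
Proof.
  intros [Hl Hh].
  apply polyA_0; lra.
Qed.

Lemma polyB_0 x : 5/2 <= x <= 12/1 -> 0 < (-360)*1 + (2346)*x + (-5493)*x^2 + (5904)*x^3 + (-2950)*x^4 + (550)*x^5 + (1)*x^6 + (-2)*x^7.
Proof.
  intros [Hl Hh].
  assert (Hu : 0 <= (2)*x - (5)) by lra.
  assert (Hv : 0 <= (24) - (2)*x) by lra.
  assert (HS : 0 <= 370006665 * ((2)*x - (5))^1 * ((24) - (2)*x)^6 + 8638948500 * ((2)*x - (5))^2 * ((24) - (2)*x)^5 + 85794719640 * ((2)*x - (5))^3 * ((24) - (2)*x)^4 + 424288875360 * ((2)*x - (5))^4 * ((24) - (2)*x)^3 + 996231882240 * ((2)*x - (5))^5 * ((24) - (2)*x)^2 + 853847519280 * ((2)*x - (5))^6 * ((24) - (2)*x)^1 + 110522202000 * ((2)*x - (5))^7 * ((24) - (2)*x)^0) by pos.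
  assert (HE : (6006818086080) * ((-360)*1 + (2346)*x + (-5493)*x^2 + (5904)*x^3 + (-2950)*x^4 + (550)*x^5 + (1)*x^6 + (-2)*x^7) = (5548798207016400) + (370006665 * ((2)*x - (5))^1 * ((24) - (2)*x)^6 + 8638948500 * ((2)*x - (5))^2 * ((24) - (2)*x)^5 + 85794719640 * ((2)*x - (5))^3 * ((24) - (2)*x)^4 + 424288875360 * ((2)*x - (5))^4 * ((24) - (2)*x)^3 + 996231882240 * ((2)*x - (5))^5 * ((24) - (2)*x)^2 + 853847519280 * ((2)*x - (5))^6 * ((24) - (2)*x)^1 + 110522202000 * ((2)*x - (5))^7 * ((24) - (2)*x)^0)) by ring.
  lra.
Qed.

Lemma polyB x : 5/2 <= x <= 12 -> 0 < (-360)*1 + (2346)*x + (-5493)*x^2 + (5904)*x^3 + (-2950)*x^4 + (550)*x^5 + (1)*x^6 + (-2)*x^7.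
Proof.
  intros [Hl Hh].
  apply polyB_0; lra.
Qed.

Lemma V_mono a0 a D J : a0 <= a -> INR J < a0 -> 0 <= D -> V a D J <= V a0 D J.
Proof.
  intros Ha HJ HD. unfold V.
  assert (K : forall j, (j <= J)%nat -> 2 / ff a (S j) <= 2 / ff a0 (S j)).
  { intros j Hj. apply le_INR in Hj.
    assert (0 < ff a0 (S j)) by (apply ff_pos; rewrite S_INR; lra).
    assert (ff a0 (S j) <= ff a (S j)) by (apply ff_mono_a; [lra| rewrite S_INR; lra]).
    unfold Rdiv. apply Rmult_le_compat_l; [lra|]. apply Rinv_le_contravar; lra. }
  apply Rplus_le_compat.
  - apply sum_Rle. intros i Hi. apply Rmult_le_compat_r; [apply pow_le; lra| apply K; lia].
  - apply Rmult_le_compat_r; [apply pow_le; lra| apply K; lia].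
Qed.

Lemma VA D : 1 < D <= 5/2 -> V (3*D+1) D 3 < 1/D.
Proof.
  intros HD. assert (H := polyA D ltac:(lra)).
  assert (Hf : 0 < ff (3*D+1) 4) by (apply ff_pos; simpl; lra).
  assert (E : 1/D - V (3*D+1) D 3 =
     ((6)*1 + (-25)*D + (22)*D^2 + (1)*D^3 + (-2)*D^4) / ff (3*D+1) 4).
  { unfold V. simpl in *. field. repeat split; lra. }
  assert (0 < ((6)*1 + (-25)*D + (22)*D^2 + (1)*D^3 + (-2)*D^4) / ff (3*D+1) 4)
    by (apply Rdiv_lt_0_compat; lra).
  lra.
Qed.

Lemma VB D : 5/2 <= D <= 12 -> V (3*D+1) D 6 < 1/D.
Proof.
  intros HD. assert (H := polyB D ltac:(lra)).
  assert (Hf : 0 < ff (3*D+1) 7) by (apply ff_pos; simpl; lra).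
  assert (E : 1/D - V (3*D+1) D 6 =
     ((-360)*1 + (2346)*D + (-5493)*D^2 + (5904)*D^3 + (-2950)*D^4 + (550)*D^5 + (1)*D^6 + (-2)*D^7) / ff (3*D+1) 7).
  { unfold V. simpl in *. field. repeat split; lra. }
  assert (0 < ((-360)*1 + (2346)*D + (-5493)*D^2 + (5904)*D^3 + (-2950)*D^4 + (550)*D^5 + (1)*D^6 + (-2)*D^7) / ff (3*D+1) 7)
    by (apply Rdiv_lt_0_compat; lra).
  lra.
Qed.

Lemma floor_ex D : 0 <= D -> exists J : nat, INR J <= D < INR J + 1.
Proof.
  intros HD. destruct (archimed D) as [H1 H2].
  set (z := up D) in *.
  assert (Hz : (1 <= z)%Z).
  { assert (0 < z)%Z by (apply lt_0_IZR; lra). lia. }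
  exists (Z.to_nat (z - 1)).
  rewrite INR_IZR_INZ, Z2Nat.id by lia. rewrite minus_IZR. simpl. lra.
Qed.

Lemma exp_bound m :
  2 * (INR (12 + m) + 1) * (2 * INR (12 + m) ^ 2 + 6 * INR (12 + m) + 5) * (1/2) ^ (12 + m) <= 3.
Proof.
  induction m as [|m IH].
  - replace (INR (12 + 0)) with 12 by (simpl; ring).
    replace ((1/2) ^ (12 + 0)) with (1/4096) by (simpl; field).
    lra.
  - replace (12 + S m)%nat with (S (12 + m)) by lia.
    rewrite S_INR. set (y := INR (12 + m)) in *.
    set (p := (1/2) ^ (12 + m)) in *.
    assert (Hy : 12 <= y) by (unfold y; rewrite plus_INR;
      assert (0 <= INR m) by apply pos_INR; replace (INR 12) with 12 by (simpl; ring); lra).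
    assert (Hp : 0 <= p) by (apply pow_le; lra).
    change ((1/2) ^ S (12 + m)) with (1/2 * (1/2) ^ (12 + m)). fold p.
    assert (0 <= (2*y^3 + 2*y^2 - 11*y - 16) * p) by (apply Rmult_le_pos; nra).
    nra.
Qed.

Definition t (a D : R) j := 2 / ff a (S j) * D ^ j.

Lemma t_rec (a D : R) j : INR (S j) < a -> t a D (S j) * (a - INR (S j)) = D * t a D j.
Proof.
  intros H. unfold t.
  assert (0 < ff a (S j)) by (apply ff_pos; rewrite S_INR in *; lra).
  change (ff a (S (S j))) with (ff a (S j) * (a - INR (S j))).
  simpl pow. field. lra.
Qed.

Lemma t_nonneg (a D : R) j : 0 <= D -> INR j < a -> 0 <= t a D j.
Proof.
  intros HD H. unfold t.
  assert (0 < ff a (S j)) by (apply ff_pos; rewrite S_INR; lra).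
  apply Rmult_le_pos; [apply Rlt_le, Rdiv_lt_0_compat; lra| apply pow_le; lra].
Qed.

Lemma t0 (a D : R) : 0 < a -> t a D 0 = 2 / a.
Proof. intros. unfold t. simpl. field. lra. Qed.

Definition SS (a D : R) J := sum_f_R0 (t a D) J.
Definition WW (a D : R) J := sum_f_R0 (fun j => INR j * t a D j) J.
Definition UU (a D : R) J := sum_f_R0 (fun j => INR j * (a - INR j) * t a D j) J.

Lemma rel1 (a D : R) J : INR J < a -> (a - D) * SS a D J = 2 + WW a D J - D * t a D J.
Proof.
  induction J as [|J IH]; intros H.
  - unfold SS, WW. simpl sum_f_R0. rewrite t0 by (simpl in H; lra). simpl. field. simpl in H; lra.
  - unfold SS, WW in *. rewrite !tech5.
    assert (H' := t_rec a D J H). rewrite S_INR in *.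
    assert (IH' := IH ltac:(lra)). nra.
Qed.

Lemma rel2 (a D : R) J : INR J < a -> UU a D J = D * (WW a D J + SS a D J) - D * (INR J + 1) * t a D J.
Proof.
  induction J as [|J IH]; intros H.
  - unfold UU, WW, SS. simpl sum_f_R0. simpl. ring.
  - unfold UU, SS, WW in *. rewrite !tech5.
    assert (H' := t_rec a D J H). rewrite S_INR in *.
    assert (IH' := IH ltac:(lra)). cbv beta. rewrite IH'.
    assert (E : (INR J + 1) * (a - (INR J + 1)) * t a D (S J) = D * (INR J + 1) * t a D J)
      by (transitivity ((INR J + 1) * (t a D (S J) * (a - (INR J + 1)))); [ring| rewrite H'; ring]).
    lra.
Qed.

Lemma UU_ge (a D : R) J : 0 <= D -> INR J < a -> (a - INR J) * WW a D J <= UU a D J.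
Proof.
  intros HD H. unfold WW, UU. rewrite scal_sum. apply sum_Rle.
  intros j Hj. apply le_INR in Hj.
  assert (0 <= t a D j) by (apply t_nonneg; lra).
  assert (0 <= INR j) by apply pos_INR.
  assert (0 <= INR j * t a D j * (INR J - INR j)) by (apply Rmult_le_pos; [apply Rmult_le_pos|]; lra).
  nra.
Qed.

Lemma t_half (a D : R) J : 0 < D -> 3 * D + 1 <= a -> INR J <= D ->
  forall j, (j <= J)%nat -> t a D j <= 2 / a * (1/2) ^ j.
Proof.
  intros HD Ha HJ. induction j as [|j IH]; intros Hj.
  - rewrite t0 by lra. simpl. lra.
  - assert (Hj' : INR (S j) <= INR J) by (apply le_INR; auto).
    assert (H1 := t_rec a D j ltac:(lra)). rewrite S_INR in *.
    assert (IH' := IH ltac:(lia)).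
    assert (0 <= t a D j) by (apply t_nonneg; lra).
    assert (0 <= t a D (S j)) by (apply t_nonneg; [lra| rewrite S_INR; lra]).
    change ((1/2) ^ S j) with (1/2 * (1/2) ^ j).
    assert (t a D (S j) * (2 * D) <= D * t a D j) by nra.
    assert (t a D (S j) <= t a D j / 2).
    { apply Rmult_le_reg_r with (2 * D); [lra|].
      unfold Rdiv. nra. }
    lra.
Qed.



Lemma final_ineq a D x S W T p :
  12 <= D -> 3 * D + 1 <= a -> x <= D -> D < x + 1 ->
  0 <= S -> 0 <= W -> 0 <= T -> T <= 2/3 * p -> 0 < p ->
  2 * (x + 1) * (2 * x ^ 2 + 6 * x + 5) * p <= 3 ->
  (a - D) * S = 2 + W - T ->
  (a - x - D) * W <= D * S ->
  S + T < 1 / D.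
Proof.
  intros HD Ha Hx1 Hx2 HS HW HT HTp Hp Hexp R1 R2.
  set (e := a - x - D) in *.
  assert (He : D + 1 <= e) by (unfold e; lra).
  assert (E1 : (a - D) * S * e = (2 + W - T) * e) by (rewrite R1; ring).
  assert (H3 : S * ((a - D) * e - D) <= (2 - T) * e).
  { assert (W * e <= D * S) by (rewrite Rmult_comm; exact R2). nra. }
  assert (H4 : S * ((2 * D + 1) * e - D) <= (2 - T) * e).
  { assert (0 <= S * e * (a - D - (2 * D + 1))) by (apply Rmult_le_pos; [apply Rmult_le_pos|]; lra). nra. }
  set (Q := 2 * D ^ 2 + 2 * D + 1).
  assert (H5 : S * Q <= (2 - T) * (D + 1)).
  { destruct (Rle_lt_dec (2 - T) ((2 * D + 1) * S)) as [c|c].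
    - assert (0 <= (e - (D + 1)) * ((2 * D + 1) * S - (2 - T))) by (apply Rmult_le_pos; lra).
      unfold Q. nra.
    - assert (S * Q * (2 * D + 1) <= (2 - T) * (D + 1) * (2 * D + 1)).
      { assert (0 <= D) by lra. unfold Q. nra. }
      apply Rmult_le_reg_r with (2 * D + 1); lra. }
  assert (H6 : T * (D ^ 2 * (2 * D + 1)) < 1).
  { assert (D ^ 2 * (2 * D + 1) < (x + 1) * (2 * x ^ 2 + 6 * x + 5)).
    { assert (D ^ 2 * (2 * D + 1) < (x + 1) ^ 2 * (2 * x + 3)).
      { assert (0 < (x + 1 - D) * (2 * ((x+1)^2 + (x+1)*D + D^2) + (x + 1 + D))).
        { apply Rmult_lt_0_compat; [lra|]. nra. }
        nra. }
      nra. }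
    assert (T * (D ^ 2 * (2 * D + 1)) <= 2/3 * p * (D ^ 2 * (2 * D + 1))).
    { apply Rmult_le_compat_r; [|lra]. assert (0 <= D^2) by nra. nra. }
    nra. }
  assert (HQ : 0 < Q) by (unfold Q; nra).
  apply Rmult_lt_reg_l with (D * Q). { apply Rmult_lt_0_compat; lra. }
  replace (D * Q * (1 / D)) with Q by (field; lra).
  unfold Q in *. nra.
Qed.

Lemma sum_nonneg f N : (forall i, (i <= N)%nat -> 0 <= f i) -> 0 <= sum_f_R0 f N.
Proof.
  induction N as [|N IH]; intros H; simpl.
  - apply H; lia.
  - apply Rplus_le_le_0_compat; [apply IH; intros; apply H; lia| apply H; lia].
Qed.

Lemma VC a D : 12 <= D -> 3 * D + 1 <= a -> exists J, INR J < a /\ V a D J < 1 / D.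
Proof.
  intros HD Ha.
  destruct (floor_ex D ltac:(lra)) as [J [HJ1 HJ2]].
  exists J. split; [lra|].
  assert (HJ12 : (12 <= J)%nat).
  { destruct (le_lt_dec 12 J) as [h|h]; auto.
    assert (h2 : (J <= 11)%nat) by lia. apply le_INR in h2. replace (INR 11) with 11 in h2 by (simpl; ring). lra. }
  assert (EV : V a D J = SS a D J + D * t a D J).
  { unfold V, SS, t. simpl pow. ring. }
  rewrite EV.
  assert (HJa : INR J < a) by lra.
  assert (R1 := rel1 a D J HJa).
  assert (R2 := rel2 a D J HJa).
  assert (R3 := UU_ge a D J ltac:(lra) HJa).
  assert (Ht : 0 <= t a D J) by (apply t_nonneg; lra).
  assert (HW : 0 <= WW a D J).
  { unfold WW. apply sum_nonneg. intros j Hj. apply le_INR in Hj.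
    apply Rmult_le_pos; [apply pos_INR| apply t_nonneg]; lra. }
  assert (HS : 0 <= SS a D J).
  { unfold SS. apply sum_nonneg. intros j Hj. apply le_INR in Hj. apply t_nonneg; lra. }
  assert (Hth := t_half a D J ltac:(lra) Ha HJ1 J (le_n J)).
  assert (Hp : 0 < (1/2) ^ J) by (apply pow_lt; lra).
  assert (HT : D * t a D J <= 2/3 * (1/2) ^ J).
  { assert (D * (2 / a) <= 2/3).
    { apply Rmult_le_reg_r with a; [lra|]. unfold Rdiv. rewrite Rmult_assoc, (Rmult_assoc 2), Rinv_l by lra. lra. }
    assert (D * t a D J <= D * (2 / a * (1/2)^J)) by (apply Rmult_le_compat_l; lra).
    nra. }
  assert (Hexp := exp_bound (J - 12)).
  replace (12 + (J - 12))%nat with J in Hexp by lia.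
  apply (final_ineq a D (INR J) _ (WW a D J) _ ((1/2)^J)); try lra.
  - apply Rmult_le_pos; lra.
  - assert (0 <= D * (INR J + 1) * t a D J).
    { assert (0 <= INR J) by apply pos_INR. apply Rmult_le_pos; [apply Rmult_le_pos|]; lra. }
    unfold UU in *. lra.
Qed.

Lemma V_good a D : 1 < D -> 3 * D + 1 <= a -> exists J, INR J < a /\ V a D J < 1 / D.
Proof.
  intros HD Ha.
  destruct (Rle_lt_dec D (5/2)) as [h1|h1].
  - exists 3%nat. assert (I3 : INR 3 = 3) by (simpl; ring). split; [lra|].
    eapply Rle_lt_trans; [apply (V_mono (3*D+1)); lra|]. apply VA; lra.
  - destruct (Rle_lt_dec D 12) as [h2|h2].
    + exists 6%nat. assert (I6 : INR 6 = 6) by (simpl; ring). split; [lra|].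
      eapply Rle_lt_trans; [apply (V_mono (3*D+1)); lra|]. apply VB; lra.
    + apply VC; lra.
Qed.

Lemma fq_g beta q x : beta < 1 ->
  f_q beta q x = g ((q - 1) / (1 - beta)) x.
Proof.
  intros Hb. unfold f_q, g.
  destruct (Rle_dec x ((q - 1) / (1 - beta) - 2)) as [H|H]; [|reflexivity].
  assert (E : q - 1 - (1 - beta) * x = (1 - beta) * ((q - 1) / (1 - beta) - x)) by (field; lra).
  assert (P : 0 < (1 - beta) * ((q - 1) / (1 - beta) - x)) by (apply Rmult_lt_0_compat; lra).
  rewrite E. field. split; lra.
Qed.

Theorem mainTheorem14 (beta Delta : R) (q : nat) :
  0 <= beta < 1 -> 1 < Delta -> INR q >= 3 * (1 - beta) * Delta + 2 ->
  exists N : nat, forall n : nat, (N <= n)%nat ->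
    binom_expect n (Delta / INR n) (f_q beta (INR q)) < 1 / Delta.
Proof.
  intros Hb HD Hq.
  set (a := (INR q - 1) / (1 - beta)).
  assert (Ha : 3 * Delta + 1 <= a).
  { unfold a. apply Rmult_le_reg_r with (1 - beta); [lra|].
    unfold Rdiv. rewrite Rmult_assoc, Rinv_l by lra. nra. }
  destruct (V_good a Delta HD Ha) as [J [HJ HV]].
  destruct (archimed_cor1 (1 / Delta)) as [N [HN1 HN2]].
  { apply Rdiv_lt_0_compat; lra. }
  exists N. intros n Hn.
  assert (HNpos : 0 < INR N) by (apply lt_0_INR; lia).
  assert (HND : Delta < INR N).
  { destruct (Rlt_le_dec Delta (INR N)) as [h|h]; auto. exfalso.
    assert (/ Delta <= / INR N) by (apply Rinv_le_contravar; lra).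
    unfold Rdiv in HN1. lra. }
  assert (HnN : INR N <= INR n) by (apply le_INR; auto).
  assert (Hn1 : (1 <= n)%nat) by lia.
  assert (Hp : 0 <= Delta / INR n <= 1).
  { split.
    - apply Rmult_le_pos; [lra| apply Rlt_le, Rinv_0_lt_compat; lra].
    - apply Rmult_le_reg_r with (INR n); [lra|]. unfold Rdiv.
      rewrite Rmult_assoc, Rinv_l by lra. lra. }
  eapply Rle_lt_trans; [|exact HV].
  eapply Rle_trans; [|apply (BE_h_le a J n Delta); [exact HJ| exact Hn1| lra]].
  change (binom_expect n (Delta / INR n) (f_q beta (INR q)))
    with (BE n (Delta / INR n) (fun k => f_q beta (INR q) (INR k))).
  apply BE_mono; [exact Hp|].
  intros k. rewrite fq_g by lra. fold a. apply g_le_h; lra.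
Qed.
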